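(* Let $w$ be a word and let $v_x, v_y$ be vertices of the graph $G(w)$ with $\mathrm{dist}(v_x, v_y) = d$ in $G(w)$. Then $|\pi_{\{x\}}(w)| - d \le |\pi_{\{y\}}(w)| \le |\pi_{\{x\}}(w)| + d$.
   Context: For a set of symbols $\mathcal S$, $\pi_{\mathcal S}(w)$ is the subsequence of $w$ consisting of all occurrences of symbols in $\mathcal S$; $|\pi_{\{x\}}(w)|$ is the number of occurrences of $x$ in $w$. Symbols $x,y$ alternate in $w$ if $\pi_{\{x,y\}}(w) \in \{(xy)^k, (xy)^kx, (yx)^k, (yx)^ky : k \ge 0\}$. $G(w)$ has one vertex $v_a$ per symbol $a$ of the alphabet and undirected edge $(v_x,v_y)$ iff $x \neq y$ alternate in $w$; $\mathrm{dist}$ is the shortest-path distance in $G(w)$. *)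

(* Defs.v *)
From mathcomp Require Import all_boot.
Set Implicit Arguments. Unset Strict Implicit. Unset Printing Implicit Defensive.

Definition proj (A : eqType) (S : pred A) (w : seq A) : seq A := [seq c <- w | S c].

Definition occ (A : eqType) (x : A) (w : seq A) : nat := size (proj (pred1 x) w).

Definition alternate (A : eqType) (x y : A) (w : seq A) : Prop :=
  let s := proj (fun c => (c == x) || (c == y)) w in
  exists k : nat,
    s = flatten (nseq k [:: x; y]) \/
    s = rcons (flatten (nseq k [:: x; y])) x \/
    s = flatten (nseq k [:: y; x]) \/
    s = rcons (flatten (nseq k [:: y; x])) y.

Definition edgeG (A : eqType) (w : seq A) (x y : A) : Prop :=
  x <> y /\ alternate x y w.

(* walk E x p z : x :: p is a walk in E ending at z (length = size p). *)
Fixpoint walk (A : Type) (E : A -> A -> Prop) (x : A) (p : seq A) (z : A) : Prop :=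
  match p with
  | [::] => x = z
  | y :: p' => E x y /\ walk E y p' z
  end.

Definition distG (A : eqType) (w : seq A) (x y : A) (d : nat) : Prop :=
  (exists p : seq A, size p = d /\ walk (edgeG w) x p y) /\
  (forall p : seq A, walk (edgeG w) x p y -> d <= size p).

(* Main.v *)
Require Import Defs.
From mathcomp Require Import all_boot zify.

Lemma cnt_rep (A : eqType) (a : pred A) (s : seq A) k :
  count a (flatten (nseq k s)) = k * count a s.
Proof. elim: k => //= k IH; by rewrite count_cat IH mulSn. Qed.

Lemma occ_s (A : eqType) (x y z : A) (w : seq A) : (z == x) || (z == y) ->
  occ z w = count (pred1 z) (proj (fun c => (c == x) || (c == y)) w).
Proof.
move=> hz; rewrite /occ /proj size_filter count_filter; apply: eq_count => c /=.
by case: (c =P z) => //= ->.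
Qed.

Lemma edge_occ (A : eqType) (w : seq A) (x y : A) :
  edgeG w x y -> occ y w <= occ x w + 1 /\ occ x w <= occ y w + 1.
Proof.
move=> [nxy [k H]].
rewrite (@occ_s _ x y x) ?eqxx // (@occ_s _ x y y) ?eqxx ?orbT //.
have ne : (x == y) = false by apply/eqP.
have ne' : (y == x) = false by apply/eqP => E; apply: nxy.
case: H => [->|[->|[->|->]]];
  rewrite -?cats1 ?count_cat !cnt_rep /= ?eqxx ?ne ?ne' /= ?addn0 ?add0n ?muln1;
  split; lia.
Qed.

Lemma walk_occ (A : eqType) (w : seq A) (p : seq A) (x y : A) :
  walk (edgeG w) x p y ->
  occ y w <= occ x w + size p /\ occ x w <= occ y w + size p.
Proof.
elim: p x => [|z p IH] x /=; first by move=> ->; rewrite addn0.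
move=> [/edge_occ [h1 h2] /IH [h3 h4]]; split; lia.
Qed.

Theorem lemma6 (A : eqType) (w : seq A) (x y : A) (d : nat) :
  distG w x y d ->
  occ x w - d <= occ y w <= occ x w + d.
Proof.
move=> [[p [<- Hp]] _]; have [h1 h2] := walk_occ _ _ _ _ _ Hp.
apply/andP; split => //; lia.
Qed.
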